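(* Let $k\ge 2$ and let $p\ge 2$ be an integer dividing $k$. If a finite simple graph $G$ admits a closed neighborhood balanced $k$-coloring, then $G$ also admits a closed neighborhood balanced $p$-coloring.
   Context: $N[v]=\{v\}\cup\{u : uv\in E(G)\}$. For an integer $m\ge 2$, a closed neighborhood balanced $m$-coloring of $G$ is a map $c: V(G)\to\{1,\dots,m\}$ such that for every vertex $v$ the numbers $|\{u\in N[v] : c(u)=i\}|$, $i=1,\dots,m$, are all equal. *)

(* Defs.v *)
From mathcomp Require Import all_boot.
Set Implicit Arguments. Unset Strict Implicit. Unset Printing Implicit Defensive.

Definition simple_graph (T : finType) (e : rel T) : Prop :=
  symmetric e /\ irreflexive e.

Definition closed_nbhd (T : finType) (e : rel T) (v : T) : {set T} :=
  [set u | (u == v) || e v u].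

(* A closed neighborhood balanced m-coloring, colors {1..m} encoded as 'I_m:
   for every v, the color classes within N[v] all have the same size. *)
Definition cnb_coloring (T : finType) (e : rel T) (m : nat) (c : T -> 'I_m) : Prop :=
  forall (v : T) (i j : 'I_m),
    #|[set u in closed_nbhd e v | c u == i]| = #|[set u in closed_nbhd e v | c u == j]|.

Definition has_cnb_coloring (T : finType) (e : rel T) (m : nat) : Prop :=
  exists c : T -> 'I_m, cnb_coloring e c.

(* Main.v *)
Require Import Defs.
From mathcomp Require Import all_boot.

Lemma count_mod (p m j : nat) : j < p ->
  \sum_(i < m * p) (i %% p == j) = m.
Proof.
move=> jp; elim: m => [|m IH]; first by rewrite mul0n big_ord0.
rewrite mulSn addnC big_split_ord /= IH.
rewrite (eq_bigr (fun i : 'I_p => (i == Ordinal jp) : nat)); last first.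
  by move=> i _; rewrite /= modnMDl modn_small.
rewrite (bigD1 (Ordinal jp)) //= eqxx big1 ?addn0 ?addn1 //.
by move=> i /negbTE ->.
Qed.

Theorem lemma2p4 (T : finType) (e : rel T) (k p : nat) :
  simple_graph e -> 2 <= k -> 2 <= p -> p %| k ->
  has_cnb_coloring e k -> has_cnb_coloring e p.
Proof.
move=> _ k2 p2 /dvdnP [m km] [c Hc].
have p0 : 0 < p by apply: leq_trans p2.
have k0 : 0 < k by apply: leq_trans k2.
exists (fun u => Ordinal (ltn_pmod (c u) p0)).
have key : forall v (j : 'I_p),
  #|[set u in closed_nbhd e v | Ordinal (ltn_pmod (c u) p0) == j]| =
  #|[set u in closed_nbhd e v | c u == Ordinal k0]| * m.
  move=> v j.
  rewrite -sum1_card (partition_big c predT) //=.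
  rewrite (eq_bigr (fun i : 'I_k =>
     #|[set u in closed_nbhd e v | c u == Ordinal k0]| * (i %% p == j))).
    rewrite -big_distrr /=; congr (_ * _).
    have := (@count_mod p m j (ltn_ord j)); clear -km.
    by move: (j : nat) => jj; rewrite km => ->.
  move=> i _.
  case: (boolP (i %% p == j)) => Hij.
    rewrite muln1 -(Hc v i) -sum1_card; apply: eq_bigl => u.
    rewrite !inE; case: (boolP (c u == i)) => [/eqP ->|]; rewrite ?andbF //.
    by rewrite -(inj_eq val_inj) /= Hij !andbT.
  rewrite muln0 big_pred0 // => u; rewrite !inE.
  case: (boolP (c u == i)) => [/eqP ->|]; rewrite ?andbF //.
  by rewrite -(inj_eq val_inj) /= (negbTE Hij) andbF.
by move=> v i j; rewrite !key.
Qed.
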